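(* Let $n\ge1$. For a word $w$ over $\{a,b\}$ the following are equivalent: (1) $w\in L^{\epsilon}_{\vdash_{\{a^nb,\,a^n\}}}$; (2) $|w|_a\equiv 0 \pmod n$ and every prefix $p$ of $w$ satisfies $|p|_a\ge n|p|_b$; (3) $w\in L^{\epsilon}_{\{a^nb,\,a^n\}}$. In particular $L^{\epsilon}_{\vdash_{\{a^nb,a^n\}}}=L^{\epsilon}_{\{a^nb,a^n\}}$.
   Context: For words $u,v$, the shuffle $u \sqcup\!\sqcup v$ is the set of all words $u_1v_1\cdots u_kv_k$ with $k\ge 1$, $u=u_1\cdots u_k$, $v=v_1\cdots v_k$ (pieces possibly empty). For a finite set $I$ of words, $v \vdash_I w$ means $w \in v \sqcup\!\sqcup u$ for some $u\in I$; $\vdash_I^*$ is its reflexive-transitive closure and $L^{\epsilon}_{\vdash_I}=\{w : \epsilon \vdash_I^* w\}$. The relation $\Rightarrow_I$ is defined by $xy\Rightarrow_I xuy$ for all words $x,y$ and $u\in I$ (insertion of a word of $I$ as a factor), $\Rightarrow^*_I$ is its reflexive-transitive closure, and $L^{\epsilon}_{I}=\{w:\epsilon\Rightarrow_I^* w\}$. *)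

(* Defs.v *)
From HB Require Import structures.
From mathcomp Require Import all_boot.
Set Implicit Arguments. Unset Strict Implicit. Unset Printing Implicit Defensive.

Inductive letter := a | b.
Definition letter_eqb (x y : letter) : bool :=
  match x, y with a, a | b, b => true | _, _ => false end.
Lemma letter_eqP : Equality.axiom letter_eqb.
Proof. by case; case; constructor. Qed.
HB.instance Definition _ := hasDecEq.Build letter letter_eqP.

Definition word := seq letter.

Definition occ (x : letter) (w : word) : nat := count_mem x w.

Fixpoint interleave (us vs : seq word) : word :=
  match us, vs with
  | u1 :: us', v1 :: vs' => u1 ++ v1 ++ interleave us' vs'
  | _, _ => [::]
  end.

Definition in_shuffle (w u v : word) : Prop :=
  exists us vs : seq word,
    [/\ 0 < size us, size us = size vs, flatten us = u, flatten vs = v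
      & w = interleave us vs].

Inductive rtc (R : word -> word -> Prop) : word -> word -> Prop :=
  | rtc_refl x : rtc R x x
  | rtc_step x y z : R x y -> rtc R y z -> rtc R x z.

(* v |-_I w  iff  w ∈ v ⧢ u for some u ∈ I *)
Definition shuf_step (I : seq word) (v w : word) : Prop :=
  exists2 u, u \in I & in_shuffle w v u.

Definition ins_step (I : seq word) (v w : word) : Prop :=
  exists x y u, [/\ u \in I, v = x ++ y & w = x ++ u ++ y].

Definition L_shuf (I : seq word) (w : word) : Prop := rtc (shuf_step I) [::] w.
Definition L_ins (I : seq word) (w : word) : Prop := rtc (ins_step I) [::] w.

Definition anb (n : nat) : word := nseq n a ++ [:: b].
Definition an (n : nat) : word := nseq n a.

(* Main.v *)
Require Import Defs.
From mathcomp Require Import all_boot.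
From mathcomp Require Import zify.

Definition Q n (w : word) := forall i, n * occ b (take i w) <= occ a (take i w).

Lemma occ_cat x s t : occ x (s ++ t) = occ x s + occ x t.
Proof. exact: count_cat. Qed.

Lemma occ_nseq x k y : occ x (nseq k y) = (y == x) * k.
Proof. by rewrite /occ count_nseq. Qed.

Lemma Q_equiv n w :
  (forall i, i <= size w -> n * occ b (take i w) <= occ a (take i w)) <-> Q n w.
Proof.
split=> [H i|H i _]; last exact: H.
case: (leqP i (size w)) => Hi; first exact: H.
rewrite take_oversize ?(ltnW Hi) //.
by have := H (size w) (leqnn _); rewrite take_size.
Qed.

Lemma rtc_snoc R x y z : rtc R x y -> R y z -> rtc R x z.
Proof.
elim=> [u Hu|u v t Huv _ IH Hz]; first by apply: rtc_step Hu (rtc_refl _ _).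
exact: rtc_step Huv (IH Hz).
Qed.

Lemma rtc_mono (R S : word -> word -> Prop) x y :
  (forall u v, R u v -> S u v) -> rtc R x y -> rtc S x y.
Proof.
move=> HRS; elim=> [u|u v t Huv _ IH]; first exact: rtc_refl.
exact: rtc_step (HRS _ _ Huv) IH.
Qed.

Lemma ins_shuf I v w : ins_step I v w -> shuf_step I v w.
Proof.
case=> [x [y [u [Hu -> ->]]]]; exists u => //.
exists [:: x; y], [:: u; [::]]; split => //=; first by rewrite cats0.
  by rewrite !cats0.
by rewrite !cats0.
Qed.

Lemma interleave_occ us vs x : size us = size vs ->
  occ x (interleave us vs) = occ x (flatten us) + occ x (flatten vs).
Proof.
elim: us vs => [|u us IH] [|v vs] //= [Hs].
rewrite !occ_cat IH //; lia.
Qed.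

Lemma interleave_take us vs i : exists j k, forall x,
  occ x (take i (interleave us vs)) =
  occ x (take j (flatten us)) + occ x (take k (flatten vs)).
Proof.
elim: us vs i => [|u us IH] [|v vs] i /=.
- by exists 0, 0 => x; rewrite ?take0.
- by exists 0, 0 => x; rewrite ?take0.
- by exists 0, 0 => x; rewrite ?take0.
case: (leqP i (size u)) => Hi.
  exists i, 0 => x; rewrite take0 addn0 [in RHS]takel_cat // takel_cat // takel_cat //.
case: (leqP i (size u + size v)) => Hi2.
  exists (size u), (i - size u) => x.
  rewrite take_cat ltnNge (ltnW Hi) /= take_cat ltnNge.
  rewrite (_ : (size v <= i - size u) = (i == size u + size v)); last by apply/idP/idP; lia.
  rewrite take_cat ltnn subnn take0 cats0.
  case: eqP => [->|_] /=.
    by rewrite addKn subnn take0 cats0 take_size_cat // !occ_cat.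
  rewrite takel_cat; last lia.
  by rewrite /occ count_cat.
have [j [k Hjk]] := IH vs (i - size u - size v).
exists (size u + j), (size v + k) => x.
rewrite take_cat ltnNge (ltnW Hi) /= take_cat ltnNge.
rewrite (_ : size v <= i - size u); last lia.
rewrite /= !takeD !drop_size_cat // take_size_cat // take_size_cat //.
rewrite !occ_cat Hjk; lia.
Qed.

Lemma occ_b_take_nseq i k : occ b (take i (nseq k a)) = 0.
Proof. by elim: k i => [|k IH] [|i] //=; rewrite /occ /= -/(occ b _) IH. Qed.

Lemma occ_a_take_nseq i k : i <= k -> occ a (take i (nseq k a)) = i.
Proof. by move=> H; rewrite take_nseq // occ_nseq mul1n. Qed.

Lemma take_catD (s t : word) j : take (size s + j) (s ++ t) = s ++ take j t.
Proof. by rewrite takeD take_size_cat // drop_size_cat. Qed.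

Lemma Q_I n u : u \in [:: anb n; an n] -> Q n u /\ occ a u = n.
Proof.
rewrite !inE => /orP [] /eqP ->.
  split; last by rewrite /anb occ_cat occ_nseq /occ /=; lia.
  move=> i; case: (leqP i n) => Hi.
    rewrite /anb takel_cat ?size_nseq // occ_b_take_nseq; lia.
  have -> : i = size (nseq n a) + (i - n) by rewrite size_nseq; lia.
  rewrite take_catD !occ_cat.
  rewrite !occ_nseq /=.
  by case: (i - n) => [|[|j]] /=; rewrite /occ /=; lia.
split; last by rewrite /an occ_nseq eqxx mul1n.
by move=> i; rewrite /an occ_b_take_nseq muln0.
Qed.

Lemma shuf_pres n v w : occ a v %% n = 0 -> Q n v ->
  shuf_step [:: anb n; an n] v w -> occ a w %% n = 0 /\ Q n w.
Proof.
move=> Hm HQ [u Hu [us [vs [_ Hs Hus Hvs ->]]]].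
have [HQu Hau] := @Q_I n u Hu.
split.
  by rewrite interleave_occ // Hus Hvs Hau modnDr.
move=> i; have [j [k Hjk]] := interleave_take us vs i.
rewrite !Hjk Hus Hvs mulnDr; apply: leq_add; [exact: HQ | exact: HQu].
Qed.

Lemma decomp (w : word) : exists m r, w = nseq m a ++ r /\
  (r = [::] \/ exists r', r = b :: r').
Proof.
elim: w => [|x w [m [r [-> Hr]]]]; first by exists 0, [::]; split => //; left.
case: x.
  by exists m.+1, r.
by exists 0, (b :: (nseq m a ++ r)); split => //; right; eexists.
Qed.

Lemma occ_cons x y s : occ x (y :: s) = (y == x) + occ x s.
Proof. by []. Qed.

Lemma to_ins n w : 0 < n -> occ a w %% n = 0 -> Q n w ->
  L_ins [:: anb n; an n] w.
Proof.
move=> Hn Hm0 HQ0.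
suff H : forall s w, size w <= s -> occ a w %% n = 0 -> Q n w ->
  L_ins [:: anb n; an n] w by apply: H (leqnn _) Hm0 HQ0.
clear Hm0 HQ0; elim=> [|s IH] {}w Hs Hm HQ.
  by case: w Hs Hm HQ => // *; exact: rtc_refl.
have [m [r [Ew [Er | [r' Er]]]]] := decomp w; subst w r.
  rewrite cats0 in Hs Hm HQ *.
  case: m Hs Hm HQ => [|m] Hs Hm HQ; first exact: rtc_refl.
  rewrite occ_nseq eqxx mul1n in Hm.
  have Hle : n <= m.+1 by apply: dvdn_leq => //; apply/eqP.
  apply: rtc_snoc (IH (nseq (m.+1 - n) a) _ _ _) _.
  - rewrite size_nseq in Hs; rewrite size_nseq; lia.
  - rewrite occ_nseq eqxx mul1n.
    by rewrite -(subnK Hle) modnDr in Hm.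
  - by move=> i; rewrite occ_b_take_nseq muln0.
  exists (nseq (m.+1-n) a), [::], (an n); split; [by rewrite !inE eqxx orbT | by rewrite cats0 | by rewrite cats0 /an -nseqD subnK].
have Hle : n <= m.
  have := HQ (size (nseq m a) + 1).
  rewrite take_catD /= !occ_cat !occ_nseq /=.
  rewrite /occ /= take0 /=; lia.
rewrite occ_cat occ_nseq eqxx mul1n occ_cons /= add0n in Hm.
rewrite size_cat size_nseq /= in Hs.
apply: rtc_snoc (IH (nseq (m - n) a ++ r') _ _ _) _.
- rewrite size_cat size_nseq; lia.
- rewrite occ_cat occ_nseq eqxx mul1n.
  by rewrite -(subnK Hle) -addnA [n + _]addnC addnA modnDr in Hm.
- move=> i; case: (leqP i (m - n)) => Hi.
    by rewrite takel_cat ?size_nseq // occ_b_take_nseq muln0.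
  have -> : i = size (nseq (m - n) a) + (i - (m - n)) by rewrite size_nseq; lia.
  rewrite take_catD !occ_cat occ_nseq occ_nseq /= mul1n mul0n add0n.
  have := HQ (size (nseq m a) + (i - (m - n)).+1).
  rewrite take_catD /= !occ_cat !occ_nseq /=.
  rewrite /occ /= -/(occ a _) -/(occ b _). nia.
exists (nseq (m - n) a), r', (anb n); split; [by rewrite !inE eqxx | by [] | ].
by rewrite /anb -catA /= catA -nseqD subnK.
Qed.

Theorem lemma13 (n : nat) (w : word) : 1 <= n ->
  (L_shuf [:: anb n; an n] w <->
     (occ a w %% n = 0 /\
      forall i, i <= size w -> n * occ b (take i w) <= occ a (take i w)))
  /\ ((occ a w %% n = 0 /\
      forall i, i <= size w -> n * occ b (take i w) <= occ a (take i w))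
     <-> L_ins [:: anb n; an n] w).
Proof.
move=> Hn.
have S2I : L_shuf [:: anb n; an n] w ->
  occ a w %% n = 0 /\ Q n w.
  rewrite /L_shuf.
  have : occ a [::] %% n = 0 /\ Q n [::].
    split; first by rewrite mod0n.
    by move=> i; case: i => [|i]; rewrite /occ /= ?muln0.

  move: [::] => v Hv H; elim: H Hv => [x|x y z Hxy _ IH] // [H1 H2].
  by apply: IH; apply: shuf_pres Hxy.
have I2S : L_ins [:: anb n; an n] w -> L_shuf [:: anb n; an n] w.
  by apply: rtc_mono => u v; apply: ins_shuf.
have P2I : occ a w %% n = 0 /\ Q n w -> L_ins [:: anb n; an n] w.
  by case=> H1 H2; apply: to_ins.
split; split.
- by move/S2I=> [H1 H2]; split => //; apply/Q_equiv.
- by case=> H1 /Q_equiv H2; apply: I2S; apply: P2I.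
- by case=> H1 /Q_equiv H2; apply: P2I.
- by move/I2S/S2I=> [H1 H2]; split => //; apply/Q_equiv.
Qed.
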